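(* Let $\Gamma$ be a splice diagram satisfying the edge determinant condition, and let $v$ be a node of $\Gamma$ with adjacent vertices $u_1,\dots,u_{\delta_v}$. Then (1) the vectors $\rho(u_1),\dots,\rho(u_{\delta_v})$ are linearly independent in $\mathbb{R}^n$; (2) $\rho(v)$ lies in the relative interior of the convex hull of $\{\rho(u_1),\dots,\rho(u_{\delta_v})\}$.
   Context: A splice diagram is a finite tree $\Gamma$ with at least one vertex of valency $\geq3$ and no vertex of valency $2$; vertices of valency $1$ are leaves, others nodes; $\delta_v$ is the valency of $v$. For each node $v$ and edge $e$ at $v$ a positive integer weight $d_{v,e}$ is given; $d_v=\prod_{e\ni v}d_{v,e}$; $d_{v,u}$ is the weight at $v$ of the edge toward $u$. For distinct vertices $u,v$, $\ell_{u,v}$ is the product of all $d_{w,e}$ with $w$ a node on the geodesic $[u,v]$ and $e$ an edge at $w$ not in $[u,v]$. Edge determinant condition: $d_{u,v}d_{v,u}>\ell_{u,v}$ for every edge $[u,v]$ between nodes. With $n$ leaves, $w_\lambda$ is the standard basis vector of $\mathbb{R}^n$ of leaf $\lambda$, $w_u=\sum_\lambda\ell_{u,\lambda}w_\lambda$ for a node $u$, and $\rho(u)=w_u/|w_u|$ ($1$-norm) for every vertex $u$. *)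

(* Defs.v *)
From HB Require Import structures.
From mathcomp Require Import all_boot all_order all_algebra.
From mathcomp Require Import boolp reals.
Set Implicit Arguments. Unset Strict Implicit. Unset Printing Implicit Defensive.
Import Order.TTheory GRing.Theory Num.Theory.
Local Open Scope ring_scope.

Section SpliceDiagram.
Variables (V : finType) (e : rel V) (d : V -> V -> nat).

Definition valency (v : V) : nat := #|[set x | e v x]|.
Definition leafb (v : V) : bool := valency v == 1%N.
Definition nodeb (v : V) : bool := (1 < valency v)%N.

Definition is_tree : Prop :=
  [/\ symmetric e, irreflexive e,
      (forall x y, connect e x y) &
      (forall p : seq V, uniq p -> (2 < size p)%N -> ~~ cycle e p)].

Definition splice_diagram : Prop :=
  [/\ is_tree,
      (exists v, 3 <= valency v)%N,
      (forall v, valency v != 2%N) &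
      (forall v x, nodeb v -> e v x -> 0 < d v x)%N].

Definition on_geodesic (u v w : V) : Prop :=
  exists p : seq V, [/\ path e u p, last u p = v, uniq (u :: p) & w \in u :: p].

(** l_{u,v}: product of the d_{w,x} over nodes w on [u,v] and edges [w,x]
    at w not on [u,v] (equivalently x not on [u,v]). *)
Definition ell (u v : V) : nat :=
  (\prod_(w | nodeb w && `[< on_geodesic u v w >])
     \prod_(x | e w x && ~~ `[< on_geodesic u v x >]) d w x)%N.

Definition edge_determinant_condition : Prop :=
  forall u v, e u v -> nodeb u -> nodeb v -> (ell u v < d u v * d v u)%N.

Definition leaves : {set V} := [set x | leafb x].

Variable R : realType.

(** R^n with n = number of leaves; coordinate j corresponds to leaf enum_val j *)
Definition wvec (u : V) : 'rV[R]_#|leaves| :=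
  \row_(j < #|leaves|)
    (if leafb u then ((u == enum_val j) : nat)%:R else (ell u (enum_val j))%:R).

Definition norm1 n (x : 'rV[R]_n) : R := \sum_(j < n) `|x ord0 j|.

Definition rho (u : V) : 'rV[R]_#|leaves| := (norm1 (wvec u))^-1 *: wvec u.

Definition neighbors (v : V) : seq V := enum [set x | e v x].

End SpliceDiagram.

Section Convex.
Variables (R : realType) (n : nat).

Definition convex_hull (S : seq 'rV[R]_n) (x : 'rV[R]_n) : Prop :=
  exists c : 'I_(size S) -> R,
    [/\ forall i, 0 <= c i, \sum_i c i = 1 & x = \sum_i c i *: S`_i].

Definition affine_hull (A : 'rV[R]_n -> Prop) (x : 'rV[R]_n) : Prop :=
  exists k (c : 'I_k -> R) (p : 'I_k -> 'rV[R]_n),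
    [/\ forall i, A (p i), \sum_i c i = 1 & x = \sum_i c i *: p i].

(** relative interior: interior of A within its affine hull
    (balls taken for the sup-norm; all norms on R^n are equivalent) *)
Definition relative_interior (A : 'rV[R]_n -> Prop) (x : 'rV[R]_n) : Prop :=
  A x /\ exists eps : R, 0 < eps /\
    forall y, affine_hull A y -> (forall j, `|y ord0 j - x ord0 j| < eps) -> A y.
End Convex.

(* Main.v *)
Require Import Defs.
From HB Require Import structures.
From mathcomp Require Import all_boot all_order all_algebra.
From mathcomp Require Import boolp reals.
From mathcomp Require Import ring lra zify.
Import Order.TTheory GRing.Theory Num.Theory.
Local Open Scope ring_scope.
Set Implicit Arguments. Unset Strict Implicit. Unset Printing Implicit Defensive.
Section LA.
Variables (R : realType) (n : nat) (S : seq 'rV[R]_n).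
Variables (s : 'rV[R]_n) (t w : 'I_(size S) -> 'rV[R]_n) (bt gm : 'I_(size S) -> R)
  (jj : 'I_(size S) -> 'I_n).
Hypotheses (k0 : (0 < size S)%N) (bt0 : forall i, 0 <= bt i) (gm0 : forall i, 0 < gm i)
 (t0 : forall i j, 0 <= t i ord0 j) (sE : s = \sum_i t i)
 (wE : forall i, w i = bt i *: s + gm i *: t i)
 (tjj : forall i, 1 <= t i ord0 (jj i)) (tjj0 : forall i m, m != i -> t m ord0 (jj i) = 0)
 (SE : forall i : 'I_(size S), S`_i = (norm1 (w i))^-1 *: w i).

Lemma norm1_pos m (x : 'rV[R]_m) : (forall j, 0 <= x ord0 j) -> norm1 x = \sum_j x ord0 j.
Proof. by move=> h; apply: eq_bigr => j _; rewrite ger0_norm. Qed.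

Lemma norm1_ge m (x : 'rV[R]_m) j : `|x ord0 j| <= norm1 x.
Proof.
rewrite /norm1 (bigD1 j) //= lerDl; exact: sumr_ge0.
Qed.

Lemma sj j : s ord0 j = \sum_i t i ord0 j.
Proof. by rewrite sE summxE. Qed.

Lemma s_ge0 j : 0 <= s ord0 j.
Proof. by rewrite sj; apply: sumr_ge0. Qed.

Lemma sjj i : s ord0 (jj i) = t i ord0 (jj i).
Proof.
rewrite sj (bigD1 i) //= big1 ?addr0 // => m /tjj0; exact.
Qed.

Lemma wj i j : w i ord0 j = bt i * s ord0 j + gm i * t i ord0 j.
Proof. by rewrite wE !mxE. Qed.

Lemma w_ge0 i j : 0 <= w i ord0 j.
Proof. by rewrite wj addr_ge0 // mulr_ge0 // ?s_ge0 // ltW. Qed.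

Lemma N_gt0 i : 0 < norm1 (w i).
Proof.
apply: (lt_le_trans _ (norm1_ge _ (jj i))); rewrite ger0_norm ?w_ge0 // wj.
apply: ltr_wpDl; first by rewrite mulr_ge0 ?s_ge0.
by apply: mulr_gt0 => //; apply: lt_le_trans (tjj i).
Qed.

Lemma Ns_gt0 : 0 < norm1 s.
Proof.
pose i := Ordinal k0.
apply: (lt_le_trans _ (norm1_ge _ (jj i))); rewrite ger0_norm ?s_ge0 // sjj.
exact: lt_le_trans (tjj i).
Qed.

Lemma coordE (z : 'I_(size S) -> R) m :
  (\sum_i z i *: w i) ord0 (jj m) =
  s ord0 (jj m) * (\sum_i bt i * z i + gm m * z m).
Proof.
rewrite summxE.
under eq_bigr do rewrite mxE wj mulrDr.
rewrite big_split /=.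
have -> : \sum_i z i * (gm i * t i ord0 (jj m)) = z m * (gm m * t m ord0 (jj m)).
  rewrite (bigD1 m) //= big1 ?addr0 // => i /tjj0 ->; by rewrite !mulr0.
rewrite -sjj mulrDr mulr_sumr; congr (_ + _); last by ring.
by apply: eq_bigr => i _; ring.
Qed.


Let T := \sum_i bt i / gm i.
Lemma T_ge0 : 0 <= T.
Proof. by apply: sumr_ge0 => i _; rewrite divr_ge0 // ltW. Qed.

Lemma la_free : free S.
Proof.
apply/(@freeP _ _ _ (in_tuple S)) => c hc.
pose z i := c i / norm1 (w i).
have hy : \sum_i z i *: w i = 0.
  rewrite -[RHS]hc; apply: eq_bigr => i _; by rewrite /= SE scalerA.
have hm m : \sum_i bt i * z i + gm m * z m = 0.
  have := coordE z m; rewrite hy mxE => /esym/eqP; rewrite mulf_eq0 => /orP[|/eqP //].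
  by move/eqP=> h; have := tjj m; rewrite -sjj h ler10.
set Z := \sum_i bt i * z i in hm.
have zm m : z m = - Z / gm m.
  have g0 : gm m != 0 by rewrite gt_eqF.
  by apply: (mulfI g0); rewrite [RHS]mulrCA divff // mulr1; move: (hm m); lra.
have ZT : Z * (1 + T) = 0.
  have h : Z = - (Z * T).
    rewrite /T mulr_sumr -sumrN; rewrite {1}/Z; apply: eq_bigr => i _.
    rewrite zm; ring.
  rewrite mulrDr mulr1 {1}h; ring.
have Z0 : Z = 0.
  by move: ZT => /eqP; rewrite mulf_eq0 => /orP[/eqP//|]; rewrite gt_eqF // ltr_wpDr ?T_ge0.
move=> i; have := zm i; rewrite Z0 oppr0 mul0r /z => /eqP.
by rewrite mulf_eq0 invr_eq0 (gt_eqF (N_gt0 i)) orbF => /eqP.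
Qed.


Let Nt i := \sum_j t i ord0 j.

Lemma Ns_sum : norm1 s = \sum_i Nt i.
Proof.
rewrite norm1_pos; last exact: s_ge0.
under eq_bigr do rewrite sj.
by rewrite exchange_big.
Qed.

Lemma Nw i : norm1 (w i) = bt i * norm1 s + gm i * Nt i.
Proof.
rewrite norm1_pos; last exact: w_ge0.
rewrite (norm1_pos s_ge0) /Nt !mulr_sumr -big_split /=.
by apply: eq_bigr => j _; rewrite wj.
Qed.

Lemma T1_gt0 : 0 < 1 + T.
Proof. by rewrite ltr_wpDr ?T_ge0. Qed.

Lemma la_hull : convex_hull S ((norm1 s)^-1 *: s).
Proof.
have Ns0 : norm1 s != 0 by rewrite gt_eqF // Ns_gt0.
have T0 : 1 + T != 0 by rewrite gt_eqF // T1_gt0.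
exists (fun i => norm1 (w i) / (norm1 s * (1 + T) * gm i)); split.
- move=> i; apply: divr_ge0; first exact: ltW (N_gt0 i).
  by rewrite !mulr_ge0 // ltW // ?Ns_gt0 ?T1_gt0.
- have -> : \sum_i norm1 (w i) / (norm1 s * (1 + T) * gm i) =
     \sum_i (bt i / gm i * norm1 s + Nt i) / (norm1 s * (1 + T)).
    apply: eq_bigr => i _; rewrite Nw.
    have g0 : gm i != 0 by rewrite gt_eqF.
    by field; rewrite g0 Ns0 T0.
  rewrite -mulr_suml big_split /= -mulr_suml -Ns_sum -/T.
  by field; rewrite T0 Ns0.
- apply/matrixP => i0 j; rewrite ord1 mxE summxE.
  have -> : \sum_i (norm1 (w i) / (norm1 s * (1 + T) * gm i) *: S`_i) ord0 j =
     \sum_i (bt i / gm i * s ord0 j + t i ord0 j) / (norm1 s * (1 + T)).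
    apply: eq_bigr => i _; rewrite SE !mxE wj.
    have g0 : gm i != 0 by rewrite gt_eqF.
    have N0 : norm1 (w i) != 0 by rewrite gt_eqF // N_gt0.
    by field; rewrite g0 Ns0 T0 N0.
  rewrite -mulr_suml big_split /= -mulr_suml -sj -/T.
  by field; rewrite T0 Ns0.
Qed.


Lemma la_relint : relative_interior (convex_hull S) ((norm1 s)^-1 *: s).
Proof.
split; first exact: la_hull.
have Ns0 : 0 < norm1 s by apply: Ns_gt0.
set a := (norm1 s)^-1.
have a0 : 0 < a by rewrite invr_gt0.
have T0 := T1_gt0.
set eps := a / (4 * (1 + T)).
have eps0 : 0 < eps by rewrite divr_gt0 // mulr_gt0.
have eps4 : eps * (4 * (1 + T)) = a.
  by rewrite /eps mulfVK // gt_eqF // mulr_gt0.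
exists eps; split => // y [K [c [p [hp hc hy]]]] hclose.
have [f hf] := choice hp.
pose b i := \sum_l c l * f l i.
have yb : y = \sum_i b i *: S`_i.
  rewrite hy; transitivity (\sum_l \sum_i (c l * f l i) *: S`_i).
    apply: eq_bigr => l _; case: (hf l) => _ _ ->; rewrite scaler_sumr.
    by apply: eq_bigr => i _; rewrite scalerA.
  by rewrite exchange_big; apply: eq_bigr => i _; rewrite scaler_suml.
have b1 : \sum_i b i = 1.
  rewrite /b exchange_big -[RHS]hc; apply: eq_bigr => l _.
  by rewrite -mulr_sumr; case: (hf l) => _ -> _; rewrite mulr1.
exists b; split => // m.
pose z i := b i / norm1 (w i).
have yz : y = \sum_i z i *: w i.
  by rewrite yb; apply: eq_bigr => i _; rewrite SE scalerA.
set Z := \sum_i bt i * z i.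
pose Y i := Z + gm i * z i.
have hY i : `|Y i - a| < eps.
  have := hclose (jj i); rewrite yz coordE !mxE -/Z -/(Y i).
  rewrite (mulrC a) -mulrBr normrM (ger0_norm (s_ge0 _)).
  apply: le_lt_trans; apply: ler_peMl => //; rewrite sjj; exact: tjj.
have ZT : Z * (1 + T) = \sum_i bt i / gm i * Y i.
  rewrite /Y; under eq_bigr do rewrite mulrDr.
  rewrite big_split /= -mulr_suml -/T mulrDr mulr1 addrC; congr (_ + _); last by rewrite mulrC.
  rewrite {1}/Z; apply: eq_bigr => i _.
  have g0 : gm i != 0 by rewrite gt_eqF.
  by field.
have h2 : \sum_i bt i / gm i * Y i <= T * (a + eps).
  rewrite /T mulr_suml; apply: ler_sum => i _; apply: ler_wpM2l.
    by rewrite divr_ge0 // ltW.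
  by have := hY i; rewrite ltr_norml => /andP[_ h]; lra.
have h1 : (1 + T) * (a - eps) <= (1 + T) * Y m.
  apply: ler_wpM2l; first exact: ltW.
  by have := hY m; rewrite ltr_norml => /andP[h _]; lra.
have TT : 0 <= T := T_ge0.
have hYZ : 0 < Y m - Z.
  have : 0 < (1 + T) * (Y m - Z).
    rewrite mulrBr (mulrC _ Z) ZT.
    nra.
  by rewrite pmulr_rgt0.
have zm0 : 0 < z m.
  by move: hYZ; rewrite /Y addrC addKr pmulr_rgt0.
have -> : b m = z m * norm1 (w m).
  by rewrite /z mulfVK // gt_eqF // N_gt0.
by rewrite mulr_ge0 // ltW // N_gt0.
Qed.

End LA.
Section Graph.
Variables (V : finType) (e : rel V) (d : V -> V -> nat).
Hypotheses (syme : symmetric e) (eirr : irreflexive e)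
  (nocyc : forall p : seq V, uniq p -> (2 < size p)%N -> ~~ cycle e p).

Lemma path_uniq p x q : path e x p -> path e x q -> uniq (x :: p) -> uniq (x :: q) ->
  last x p = last x q -> p = q.
Proof.
elim: p x q => [|a p IH] x q.
  move=> _ pq _; case: q pq => [//|b q] /= _ /andP[xq _] lq.
  by move: xq; rewrite lq mem_last.
move=> /= /andP[exa pa] pq /andP[]; rewrite inE negb_or => /andP[xa xp] uap uq lq.
case: (boolP (a \in q)) => aq.
  case/splitPr: aq pq uq lq => q1 q2; case: q1 => [|c q1] pq uq lq.
    rewrite /=; congr (_ :: _); move: pq uq => /= /andP[_ pq] /andP[_ uq].
    exact: IH pa pq uap uq lq.
  exfalso; have u1 : uniq (x :: rcons (c :: q1) a).
    have : uniq ((x :: rcons (c :: q1) a) ++ q2).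
      by move: uq; rewrite -cats1 /= -catA.
    by rewrite cat_uniq => /andP[].
  have := nocyc u1; rewrite /= size_rcons ltnS ltnS ltn0Sn => /(_ isT) /negP; apply.
  rewrite /= rcons_path last_rcons.
  have hp1 : path e x (rcons (c :: q1) a).
    move: pq; rewrite cat_path => /andP[p1 /= /andP[ea _]]; rewrite rcons_path ea andbT; exact: p1.
  by move: hp1 => /= /andP[-> ->]; rewrite syme exa.
have /= := IH a (x :: q) pa; rewrite syme exa pq => /(_ isT uap).
rewrite inE negb_or aq eq_sym xa uq => /(_ isT lq) pE.
by move: xp; rewrite pE mem_head.
Qed.

Lemma nbr x p w : path e x p -> uniq (x :: p) -> w \in p -> e x w -> w = head x p.
Proof.
move=> hp up wp exw; case/splitPr: wp hp up => p1 p2 hp up.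
have: p1 ++ [:: w] = [:: w].
  apply: (@path_uniq _ x) => //.
  - by move: hp; rewrite !cat_path /= => /and3P[-> -> _].
  - by rewrite /= exw.
  - move: up; rewrite (_ : x :: p1 ++ w :: p2 = (x :: p1 ++ [:: w]) ++ p2); last by rewrite /= -catA.
    by rewrite cat_uniq => /andP[].
  - rewrite /= inE andbT; apply/eqP => xw; by move: exw; rewrite xw eirr.
  - by rewrite last_cat.
by case: p1 {hp up} => //= a p1 [_]; case: p1.
Qed.

Lemma geoE x p w : path e x p -> uniq (x :: p) ->
  `[< on_geodesic e x (last x p) w >] = (w \in x :: p).
Proof.
move=> hp up; apply/idP/idP => [/asboolP [q [hq lq uq wq]] | wp].
  by have <- := path_uniq hq hp uq up lq.
by apply/asboolP; exists p.
Qed.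

Hypothesis conn : forall x y, connect e x y.

Lemma exgeo x y : exists p, [/\ path e x p, last x p = y & uniq (x :: p)].
Proof.
have /connectP [p0 h yE] := conn x y.
move: yE; case: (shortenP h) => p' hp' up' _ yE.
by exists p'.
Qed.


Definition E (c : seq V) : nat :=
  (\prod_(w | nodeb e w && (w \in c)) \prod_(z | e w z && (z \notin c)) d w z)%N.

Lemma E_eq c1 c2 : c1 =i c2 -> E c1 = E c2.
Proof.
move=> h; apply: eq_big => [w|w _]; first by rewrite h.
by apply: eq_bigl => z; rewrite h.
Qed.

Lemma ellE x p : path e x p -> uniq (x :: p) -> ell e d x (last x p) = E (x :: p).
Proof.
move=> hp up; apply: eq_big => [w|w _]; first by rewrite geoE.
by apply: eq_bigl => z; rewrite geoE.
Qed.

Definition G x c :=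
  (\prod_(w | nodeb e w && (w \in c)) \prod_(z | e w z && (z \notin x :: c)) d w z)%N.

Section Cons.
Variables (x y : V) (c : seq V).
Hypotheses (xc : x \notin c) (yc : y \in c) (exy : e x y)
  (nb : forall w, w \in c -> e x w -> w = y).

Lemma E_cons1 :
  E (x :: c) = ((if nodeb e x then \prod_(z | e x z && (z != y)) d x z else 1) * G x c)%N.
Proof.
rewrite /E /G; case: ifP => nx.
  rewrite (bigD1 x) /= ?mem_head ?nx //; congr (_ * _)%N.
    apply: eq_bigl => z; rewrite inE negb_or.
    case: (boolP (e x z)) => //= exz.
    have -> : (z != x) by apply/eqP => zx; move: exz; rewrite zx eirr.
    case: (boolP (z \in c)) => zc /=.
      by rewrite (nb zc exz) eqxx.
    by symmetry; apply/eqP => zy; move: zc; rewrite zy yc.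
  apply: eq_bigl => w; rewrite inE.
  case: (eqVneq w x) => [->|wx] /=; first by rewrite (negbTE xc) !andbF.
  by rewrite andbT.
rewrite mul1n; apply: eq_bigl => w; rewrite inE.
case: (eqVneq w x) => [->|wx] /=; first by rewrite nx (negbTE xc).
by [].
Qed.

Lemma E_cons2 : E c = ((if nodeb e y then d y x else 1) * G x c)%N.
Proof.
rewrite /E /G.
have h w : nodeb e w && (w \in c) ->
    (\prod_(z | e w z && (z \notin c)) d w z =
    (if w == y then d y x else 1) * \prod_(z | e w z && (z \notin x :: c)) d w z)%N.
  move=> /andP[nw wc]; case: (eqVneq w y) => [->|wy].
    rewrite (bigD1 x) /=; last by rewrite syme exy xc.
    congr (_ * _)%N; apply: eq_bigl => z; rewrite inE negb_or.
    by case: (e y z); case: (z \in c); case: (z == x).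
  rewrite mul1n; apply: eq_bigl => z; rewrite inE negb_or.
  case: (eqVneq z x) => [->|zx] /=; last by [].
  case: (boolP (e w x)) => //= ewx.
  by move: wy; rewrite (nb wc) ?eqxx // syme.
rewrite (eq_bigr _ h) big_split /=; congr (_ * _)%N.
case: ifP => ny.
  rewrite (bigD1 y) /= ?ny ?yc // eqxx big1 ?muln1 //.
  by move=> w /andP[_ /negbTE ->].
apply: big1 => w /andP[nw _]; case: eqP => // wy.
by move: nw; rewrite wy ny.
Qed.
End Cons.


Hypothesis hd : forall v x, nodeb e v -> e v x -> (0 < d v x)%N.

Lemma ell_gt0 x y : (0 < ell e d x y)%N.
Proof.
apply: prodn_cond_gt0 => w /andP[nw _]; apply: prodn_cond_gt0 => z /andP[ewz _].
exact: hd.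
Qed.

Definition F x u := (\prod_(z | e x z && (z != u)) d x z)%N.

Lemma geo_from x l : x != l ->
  exists u p, [/\ e x u, path e u p, last u p = l & uniq (x :: u :: p)].
Proof.
move=> xl; have [[|u p] [hp lp up]] := exgeo x l.
  by move: xl; rewrite -lp eqxx.
by move: hp => /= /andP[exu hp]; exists u, p.
Qed.

Section Side.
Variables (x u l : V) (p : seq V).
Hypotheses (exu : e x u) (hp : path e u p) (lp : last u p = l) (up : uniq (x :: u :: p)).

Let hp' : path e x (u :: p). Proof. by rewrite /= exu. Qed.

Lemma side y : e x y -> `[< on_geodesic e x l y >] = (y == u).
Proof.
move=> exy; rewrite -lp -[last u p]/(last x (u :: p)) geoE // inE.
have -> : (y == x) = false by apply/eqP => yx; move: exy; rewrite yx eirr.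
apply/idP/eqP => [yp|->]; last exact: mem_head.
exact: (nbr hp' up yp exy).
Qed.

Lemma ellA : nodeb e x -> nodeb e u -> (F x u * ell e d u l = d u x * ell e d x l)%N.
Proof.
move=> nx nu.
rewrite -lp (_ : ell e d x (last u p) = ell e d x (last x (u :: p))) //.
rewrite !ellE //; last by case/andP: up.
have xc : x \notin u :: p by case/andP: up.
have nb w : w \in u :: p -> e x w -> w = u by move=> wc exw; exact: (nbr hp' up wc exw).
rewrite (E_cons1 xc (mem_head _ _) nb) (E_cons2 xc (mem_head _ _) exu nb) nx nu.
by rewrite mulnCA.
Qed.

Lemma ellB y : nodeb e x -> nodeb e y -> e x y -> y != u ->
  (d x y * ell e d y l = F y x * ell e d x l)%N.
Proof.
move=> nx ny exy yu.
have yc : y \notin x :: u :: p.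
  rewrite inE negb_or; apply/andP; split.
    by apply/eqP => yx; move: exy; rewrite yx eirr.
  by apply/negP => yp; move: yu; rewrite (nbr hp' up yp exy) eqxx.
have hpy : path e y (x :: u :: p) by rewrite /= syme exy exu.
have uy : uniq (y :: x :: u :: p) by rewrite /= yc.
have nb w : w \in x :: u :: p -> e y w -> w = x.
  by move=> wc eyw; exact: (nbr hpy uy wc eyw).
have eyx : e y x by rewrite syme.
rewrite -lp (_ : ell e d y (last u p) = ell e d y (last y (x :: u :: p))) //.
rewrite (_ : ell e d x (last u p) = ell e d x (last x (u :: p))) // !ellE //.
rewrite (E_cons1 yc (mem_head _ _) nb) (E_cons2 yc (mem_head _ _) eyx nb) nx ny.
by rewrite mulnCA.
Qed.

Lemma E1 z : ~~ nodeb e z -> E [:: z] = 1%N.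
Proof.
move=> nz; apply: big1 => w /andP[nw]; rewrite inE => /eqP wz.
by move: nz; rewrite -wz nw.
Qed.

Lemma leafA : nodeb e x -> leafb e u -> l = u /\ ell e d x u = F x u.
Proof.
move=> nx lu; split.
  case: p hp up lp => [_ _ /= -> //|y p'] /= /andP[euy _] /andP[xn _] _.
  move: lu; rewrite /leafb /valency => /cards1P [z hz].
  have : y \in [set z] by rewrite -hz inE.
  have : x \in [set z] by rewrite -hz inE syme.
  rewrite !inE => /eqP xz /eqP yz; move: xn.
  by rewrite !inE xz yz eqxx !orbT.
have nu : ~~ nodeb e u by move: lu; rewrite /leafb /nodeb => /eqP ->.
have xc : x \notin [:: u] by move: up; rewrite /= !inE negb_or => /andP[/andP[]].
have nb w : w \in [:: u] -> e x w -> w = u by rewrite inE => /eqP.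
rewrite (_ : ell e d x u = ell e d x (last x [:: u])) // ellE /=; last first.
  by rewrite andbT inE; apply/eqP => xu; move: exu; rewrite xu eirr.
  by rewrite exu.
rewrite (E_cons1 xc (mem_head _ _) nb) nx.
have := E_cons2 xc (mem_head _ _) exu nb; rewrite (negbTE nu) mul1n E1 // => <-.
by rewrite muln1.
Qed.

End Side.

Lemma ell_edge x u : nodeb e x -> nodeb e u -> e x u -> ell e d u x = (F u x * F x u)%N.
Proof.
move=> nx nu exu.
have xu : x != u by apply/eqP => xu; move: exu; rewrite xu eirr.
have xc : x \notin [:: u] by rewrite inE.
have nb w : w \in [:: u] -> e x w -> w = u by rewrite inE => /eqP.
rewrite (_ : ell e d u x = ell e d u (last u [:: x])) // ellE /=; first last.
  by rewrite inE eq_sym xu.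
  by rewrite syme exu.
rewrite (E_eq (c2 := [:: x; u])); last by move=> w; rewrite !inE orbC.
rewrite (E_cons1 xc (mem_head _ _) nb) nx mulnC; congr (_ * _)%N.
have := E_cons2 xc (mem_head _ _) exu nb; rewrite nu.
have -> : E [:: u] = (d u x * F u x)%N.
  rewrite /E (big_pred1 u); last by move=> w /=; rewrite inE; case: (eqVneq w u) => [->|_]; rewrite ?nu ?andbF ?eqxx.
  rewrite (bigD1 x) /=; last by rewrite syme exu inE.
  congr (_ * _)%N; apply: eq_bigl => z; rewrite inE.
  case: (boolP (e u z)) => //= euz.
  by have -> : (z == u) = false by apply/eqP => zu; move: euz; rewrite zu eirr.
have hpos : (0 < d u x)%N by apply: hd => //; rewrite syme.
move/eqP; rewrite eqn_mul2l => /orP[/eqP h|/eqP -> //].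
by rewrite h in hpos.
Qed.


Lemma leaf_ext x u : e x u ->
  exists p, [/\ path e u p, uniq (x :: u :: p) & leafb e (last u p)].
Proof.
move=> exu.
suff: forall m q, (#|V| - size q <= m)%N -> path e u q -> uniq (x :: u :: q) ->
  exists p, [/\ path e u p, uniq (x :: u :: p) & leafb e (last u p)].
  have xu : x != u by apply/eqP => xu; move: exu; rewrite xu eirr.
  move/(_ #|V| [::]); apply => //; first by rewrite subn0.
  by rewrite /= inE xu.
elim=> [|m IH] q hm hq uq.
  move/card_uniqP: uq => hc; have h2 := max_card (mem (x :: u :: q)).
  rewrite hc /= in h2; move: hm; rewrite leqn0 subn_eq0 => hm.
  by have := leq_trans h2 hm => /ltnW; rewrite ltnn.
case: (boolP (leafb e (last u q))) => lz; first by exists q.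
set z := last u q in lz.
case: (pickP (fun y => e z y && (y \notin x :: u :: q))) => [y /andP[ezy yn]|none].
  apply: (IH (rcons q y)).
  - rewrite size_rcons; lia.
  - by rewrite rcons_path hq.
  - by rewrite -!rcons_cons rcons_uniq yn.
exfalso; move/negP: lz; apply.
have zE : z = last x (u :: q) by [].
set r := rev (belast x (u :: q)).
have hr : path e z r.
  rewrite /r zE rev_path.
  by rewrite (eq_path (e' := e)) /= ?exu ?hq // => a b; rewrite syme.
have ur : uniq (z :: r).
  by rewrite /r zE -rev_rcons -lastI rev_uniq.
have : (0 < size r)%N by rewrite /r size_rev size_belast.
case rE: r => [|a r'] // _.
have eza : e z a by move: hr; rewrite rE /= => /andP[].
have nb w : e z w -> w = a.
  move=> ezw; have := none w; rewrite /= ezw /= => /negbFE wc.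
  have wr : w \in r.
    move: wc; rewrite -[x :: u :: q]/(x :: (u :: q)) lastI -zE mem_rcons inE.
    case/orP => [/eqP wz|]; last by rewrite /r mem_rev.
    by move: ezw; rewrite wz eirr.
  by have := nbr hr ur wr ezw; rewrite rE.
rewrite /leafb /valency; apply/cards1P; exists a; apply/setP => w; rewrite !inE.
by apply/idP/eqP => [/nb|->].
Qed.

End Graph.

Lemma sum_pick (R : realType) (T : eqType) (s : seq T) x0 (a : T) (c : R) n :
  n = size s -> uniq s -> a \in s ->
  \sum_(i < n) (if nth x0 s i == a then c else 0) = c.
Proof.
move=> -> us ha.
have hi : (index a s < size s)%N by rewrite index_mem.
rewrite (bigD1 (Ordinal hi)) //= nth_index // eqxx big1 ?addr0 // => i ne.
case: ifP => // /eqP h; move: ne; rewrite -(inj_eq val_inj) /=.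
by rewrite -(nth_uniq x0 (ltn_ord i) hi us) nth_index // h eqxx.
Qed.

Unset Implicit Arguments.

Theorem proposition5p7 (R : realType) (V : finType) (e : rel V) (d : V -> V -> nat) :
  splice_diagram e d -> edge_determinant_condition e d ->
  forall v : V, nodeb e v ->
    free [seq rho e d R u | u <- neighbors e v] /\
    relative_interior (convex_hull [seq rho e d R u | u <- neighbors e v]) (rho e d R v).
Proof.
move=> [[syme eirr conn nocyc] _ _ hd] hedc v nv.
set nb := neighbors e v.
set S := [seq rho e d R u | u <- nb].
have sizeS : size S = size nb by rewrite size_map.
pose u (i : 'I_(size S)) := nth v nb i.
have ilt (i : 'I_(size S)) : (i < size nb)%N by rewrite -sizeS.
have unb i : u i \in nb by rewrite mem_nth.
have evu i : e v (u i) by move: (unb i); rewrite /nb /neighbors mem_enum inE.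
have nbu : uniq nb by apply: enum_uniq.
have uE i m : (u i == u m) = (i == m).
  by rewrite nth_uniq // -(inj_eq val_inj).
have nlv : ~~ leafb e v by move: nv; rewrite /nodeb /leafb; case: (valency e v) => [|[]].
have lvne l : leafb e l -> v != l by move=> hl; apply/eqP => vl; move: nlv; rewrite vl hl.
have leafj (j : 'I_#|leaves e|) : leafb e (enum_val j) by move: (enum_valP j); rewrite inE.
set s := wvec e d R v.
have sE j : s ord0 j = (ell e d v (enum_val j))%:R by rewrite mxE (negbTE nlv).
pose t i := \row_j (if `[< on_geodesic e v (enum_val j) (u i) >] then s ord0 j else 0).
pose bt i : R := if nodeb e (u i) then (F e d (u i) v)%:R / (d v (u i))%:R else 0.
pose al i : R := if nodeb e (u i) then (d (u i) v)%:R / (F e d v (u i))%:R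
                 else 1 / (F e d v (u i))%:R.
pose gm i := al i - bt i.
pose w i := wvec e d R (u i).
have Fpos x y : nodeb e x -> (0 < F e d x y)%N.
  by move=> nx; apply: prodn_cond_gt0 => z /andP[exz _]; apply: hd.
have dvu i : (0 < d v (u i))%N by apply: hd.
have Fvu i : (0 < F e d v (u i))%N by apply: Fpos.
have sideP l : leafb e l -> exists u0, e v u0 /\ forall y, e v y -> `[< on_geodesic e v l y >] = (y == u0).
  move=> hl; have [u0 [p [evu0 hp lp up]]] := geo_from conn (lvne _ hl).
  by exists u0; split => // y evy; exact: (side syme eirr nocyc evu0 hp lp up evy).
have k0 : (0 < size S)%N.
  rewrite sizeS /nb /neighbors -cardE; move: nv; rewrite /nodeb /valency.
  exact: ltnW.
have bt0 i : 0 <= bt i by rewrite /bt; case: ifP => // _; exact: divr_ge0.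
have gm0 i : 0 < gm i.
  rewrite /gm /al /bt; case: ifP => nu; last by rewrite subr0 divr_gt0 // ltr0n.
  have := hedc (u i) v (_ : e (u i) v) nu nv; rewrite syme evu => /(_ isT).
  rewrite (ell_edge syme eirr nocyc hd nv nu (evu i)) => h.
  have h' : (F e d (u i) v)%:R * (F e d v (u i))%:R < (d (u i) v)%:R * (d v (u i))%:R :> R.
    by rewrite -!natrM ltr_nat.
  have f0 : (F e d v (u i))%:R != 0 :> R by rewrite pnatr_eq0 -lt0n.
  have d0 : (d v (u i))%:R != 0 :> R by rewrite pnatr_eq0 -lt0n.
  have -> : (d (u i) v)%:R / (F e d v (u i))%:R - (F e d (u i) v)%:R / (d v (u i))%:R =
      ((d (u i) v)%:R * (d v (u i))%:R - (F e d (u i) v)%:R * (F e d v (u i))%:R) /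
      ((F e d v (u i))%:R * (d v (u i))%:R) :> R.
    by field; rewrite f0 d0.
  by rewrite divr_gt0 ?subr_gt0 // mulr_gt0 // ltr0n.
have t0 i j : 0 <= t i ord0 j by rewrite mxE; case: ifP => // _; rewrite sE ler0n.
have sEt : s = \sum_i t i.
  apply/matrixP => i0 j; rewrite ord1 summxE.
  under eq_bigr do rewrite mxE.
  have [u0 [evu0 hog]] := sideP _ (leafj j).
  under eq_bigr do rewrite hog //.
  by symmetry; apply: sum_pick => //; rewrite /nb /neighbors mem_enum inE.
have wE i : w i = bt i *: s + gm i *: t i.
  apply/matrixP => i0 j; rewrite ord1 !mxE.
  have [u0 [p [evu0 hp lp up]]] := geo_from conn (lvne _ (leafj j)).
  have hog := side syme eirr nocyc evu0 hp lp up.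
  rewrite hog // (negbTE nlv).
  have f0 : (F e d v (u i))%:R != 0 :> R by rewrite pnatr_eq0 -lt0n.
  have d0 : (d v (u i))%:R != 0 :> R by rewrite pnatr_eq0 -lt0n.
  case: (boolP (nodeb e (u i))) => nu.
    have nlu : ~~ leafb e (u i).
      by move: nu; rewrite /nodeb /leafb; case: (valency e (u i)) => [|[]].
    rewrite (negbTE nlu) /gm /al /bt nu.
    case: (eqVneq (u i) u0) => [ue|une].
      move: nu f0 d0; rewrite ue => nu f0 d0.
      have h := ellA d syme eirr nocyc evu0 hp lp up nv nu.
      have h' : (F e d v u0)%:R * (ell e d u0 (enum_val j))%:R =
                (d u0 v)%:R * (ell e d v (enum_val j))%:R :> R by rewrite -!natrM h.
      apply: (mulfI f0); rewrite h'; field; by rewrite ?f0 ?d0.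
    have h := ellB d syme eirr nocyc evu0 hp lp up nv nu (evu i) une.
    have h' : (d v (u i))%:R * (ell e d (u i) (enum_val j))%:R =
              (F e d (u i) v)%:R * (ell e d v (enum_val j))%:R :> R by rewrite -!natrM h.
    apply: (mulfI d0); rewrite h'; field; by rewrite ?f0 ?d0.
  have lu : leafb e (u i).
    have h1 : (0 < valency e (u i))%N.
      by apply/card_gt0P; exists v; rewrite inE syme evu.
    by move: h1 nu; rewrite /nodeb /leafb; case: (valency e (u i)) => [|[|k]].
  rewrite lu /gm /al /bt (negbTE nu) subr0.
  case: (eqVneq (u i) u0) => [ue|une].
    move: lu f0 d0; rewrite ue => lu f0 d0.
    have [lE ellE'] := leafA d syme eirr nocyc evu0 hp lp up nv lu.
    by rewrite lE eqxx ellE' mul0r add0r mul1r mulVf.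
  have hne : (u i == enum_val j) = false.
    apply/negbTE/eqP => h; have := hog (u i) (evu i); rewrite (negbTE une) h -lp.
    rewrite (_ : last u0 p = last v (u0 :: p)) // geoE ?mem_last //= evu0.
    by [].
  by rewrite hne mul0r mulr0 addr0.
have hex i : exists j : 'I_#|leaves e|, `[< on_geodesic e v (enum_val j) (u i) >].
  have [p [hp up lf]] := leaf_ext syme eirr nocyc (evu i).
  have hl : last (u i) p \in leaves e by rewrite inE.
  exists (enum_rank_in hl (last (u i) p)); rewrite enum_rankK_in //.
  by rewrite (side syme eirr nocyc (evu i) hp (erefl _) up (evu i)) eqxx.
have [jj hjj] := choice hex.
have tjj i : 1 <= t i ord0 (jj i).
  by rewrite mxE (hjj i) sE ler1n ell_gt0.
have tjj0 i m : m != i -> t m ord0 (jj i) = 0.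
  move=> mi; rewrite mxE.
  have [u0 [evu0 hog]] := sideP _ (leafj (jj i)).
  have := hjj i; rewrite hog // => /eqP ui.
  by rewrite hog // -ui uE (negbTE mi).
have SE (i : 'I_(size S)) : S`_i = (norm1 (w i))^-1 *: w i.
  by rewrite (nth_map v) // ilt.
split; first exact: (la_free bt0 gm0 t0 sEt wE tjj tjj0 SE).
exact: (la_relint k0 bt0 gm0 t0 sEt wE tjj tjj0 SE).
Qed.
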